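(* Let $k,t$ be positive integers with $t\geq k$. Let $D'$ be an $n$-vertex digraph and $\sigma$ an ordering of $V(D')$ such that $D'$ is $(\sigma,k,t)$-good. Then for every set $S \subseteq V(D')$ of $k-1$ vertices and every $v \in V(D')\setminus S$, there exist a directed path in $D'-S$ from $v$ to a vertex of $\sigma(n-t+1,n)$ and a directed path in $D'-S$ from a vertex of $\sigma(1,t)$ to $v$.
   Context: For an ordering $\sigma = (v_1,\dots, v_n)$ of the vertices of a digraph, an arc from $v_i$ to $v_j$ is $\sigma$-forward if $i<j$. For integers $a,b$, $\sigma(a,b) := \{ v_{\ell} : a\leq \ell \leq b, \ell \in \{1,\dots,n\}\}$. For positive integers $k,t$, an $n$-vertex digraph $D$ with ordering $\sigma$ of $V(D)$ is $(\sigma,k,t)$-good if: (D1) every arc of $D$ is $\sigma$-forward; (D2) every vertex in $\sigma(1,n-t)$ has out-degree at least $k$ in $D$; (D3) every vertex in $\sigma(t+1,n)$ has in-degree at least $k$ in $D$. A path may consist of a single vertex. $D'-S$ denotes the digraph obtained by deleting $S$. *)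

(* Defs.v *)
From mathcomp Require Import all_boot.
Set Implicit Arguments. Unset Strict Implicit. Unset Printing Implicit Defensive.

(* An ordering sigma = (v_1,...,v_n) of V is a bijection sigma : 'I_n -> V,
   with v_(i+1) = sigma i (0-based ordinals, 1-based positions). *)

Definition seg (V : finType) (n : nat) (sigma : 'I_n -> V) (a b : nat) : {set V} :=
  [set sigma i | i : 'I_n & (a <= i.+1 <= b)].

Definition outdeg (V : finType) (D : rel V) (v : V) : nat := #|[set w | D v w]|.
Definition indeg (V : finType) (D : rel V) (v : V) : nat := #|[set w | D w v]|.

Definition good (V : finType) (n : nat) (D : rel V) (sigma : 'I_n -> V) (k t : nat) : Prop :=
  [/\ (forall i j : 'I_n, D (sigma i) (sigma j) -> i < j),
      (forall v, v \in seg sigma 1 (n - t) -> k <= outdeg D v) &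
      (forall v, v \in seg sigma t.+1 n -> k <= indeg D v)].

Definition dpath_avoid (V : finType) (D : rel V) (S : {set V}) (x : V) (p : seq V) : Prop :=
  [/\ path D x p, uniq (x :: p) & all (fun y => y \notin S) (x :: p)].

(* Main.v *)
Require Import Defs.
From mathcomp Require Import all_boot.
From mathcomp Require Import zify.

Lemma avoid_pick (V : finType) (A S : {set V}) (k : nat) :
  0 < k -> k <= #|A| -> #|S| = k - 1 -> exists w, w \in A /\ w \notin S.
Proof.
move=> k0 kA HS; case: (eqVneq (A :\: S) set0) => [/eqP|/set0Pn [w]].
  rewrite setD_eq0 => /subset_leq_card; lia.
by rewrite inE => /andP[a b]; exists w.
Qed.

Theorem claim3p1 (V : finType) (n : nat) (D : rel V) (sigma : 'I_n -> V) (k t : nat) :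
  0 < k -> 0 < t -> k <= t ->
  bijective sigma ->
  good D sigma k t ->
  forall (S : {set V}) (v : V), #|S| = k - 1 -> v \notin S ->
    (exists p : seq V, dpath_avoid D S v p /\ last v p \in seg sigma (n - t + 1) n) /\
    (exists (u : V) (p : seq V), u \in seg sigma 1 t /\ dpath_avoid D S u p /\ last u p = v).
Proof.
move=> k0 t0 kt [g sg gs] [Hf Hout Hin] S v HS vS.
have segP a b x : a <= (g x).+1 <= b -> x \in seg sigma a b.
  by move=> h; rewrite /seg -[x]gs; apply: imset_f; rewrite inE.
have Dlt x y : D x y -> g x < g y.
  by move=> h; apply: Hf; rewrite !gs.
have puniq x p : path D x p -> uniq (x :: p).
  move=> hp; have fi : injective (fun y => nat_of_ord (g y)).
    by move=> a b /val_inj/(can_inj gs).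
  rewrite -(map_inj_uniq fi).
  apply: (sorted_uniq ltn_trans ltnn) => /=.
  elim: p x hp => //= a p IH x /andP[h1 h2].
  by rewrite (Dlt _ _ h1) IH.
split.
  suff H : forall m x, x \notin S -> n <= g x + m ->
    exists p, [/\ path D x p, all (fun y => y \notin S) (x :: p)
              & last x p \in seg sigma (n - t + 1) n].
    have [p [hp ha hl]] := H n v vS (leq_addl _ _).
    by exists p; split => //; split => //; apply: puniq.
  elim=> [|m IH] x xS hm.
    have := ltn_ord (g x); lia.
  case: (leqP (n - t) (g x)) => hx.
    exists [::]; split => //=; first by rewrite xS.
    apply: segP; have := ltn_ord (g x); lia.
  have xin : x \in seg sigma 1 (n - t) by apply: segP; lia.
  have [w [wD wS]] := @avoid_pick _ _ _ k k0 (Hout x xin) HS.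
  rewrite inE in wD.
  have := Dlt _ _ wD => lw.
  have [p [hp ha hl]] := IH w wS ltac:(lia).
  by exists (w :: p); split => //=; rewrite ?wD ?hp // xS.
suff H : forall m x, x \notin S -> g x < m ->
  exists u p, [/\ u \in seg sigma 1 t, path D u p, all (fun y => y \notin S) (u :: p)
              & last u p = x].
  have [u [p [hu hp ha hl]]] := H n v vS (ltn_ord _).
  by exists u, p; do !split => //; apply: puniq.
elim=> [|m IH] x xS hm //.
case: (leqP (g x).+1 t) => hx.
  exists x, [::]; split => //=; last by rewrite xS.
  by apply: segP; lia.
have xin : x \in seg sigma t.+1 n by apply: segP; have := ltn_ord (g x); lia.
have [w [wD wS]] := @avoid_pick _ _ _ k k0 (Hin x xin) HS.
rewrite inE in wD.
have := Dlt _ _ wD => lw.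
have [u [p [hu hp ha hl]]] := IH w wS ltac:(lia).
exists u, (rcons p x); split => //.
- by rewrite rcons_path hp hl wD.
- by rewrite -cats1 -cat_cons all_cat ha /= xS.
- by rewrite last_rcons.
Qed.
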